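(* Let $\mu=(p,q,r,s)\in\mathbb{C}^4$ and $\phi\in\Phi_\mu$. Then $\log^+|\phi|=\max\{\log|\phi|,0\}$ has an upper Fibonacci bound on $\Omega$: for a fixed edge $e$ there is $\kappa>0$ with $\log^+|\phi(X)|\le \kappa F_e(X)$ for all $X\in\Omega$.
   Context: Let $\Sigma$ be a countably infinite simplicial tree, properly embedded in the plane, all of whose vertices have degree $3$. A complementary region is the closure of a connected component of the complement of $\Sigma$; $\Omega$ is the set of complementary regions, $E(\Sigma)$ the set of edges. Every edge $e$ is the intersection of exactly two regions $X,Y$, and its two endpoints lie on two further regions $Z,W$ respectively; write $e\leftrightarrow(X,Y;Z,W)$. Three regions meet at each vertex. Fix a coloring $\mathcal C:\Omega\cup E(\Sigma)\to\{1,2,3\}$ such that for every $e\leftrightarrow(X,Y;Z,W)$, $\mathcal C(e)=\mathcal C(Z)=\mathcal C(W)$ and $\mathcal C(e),\mathcal C(X),\mathcal C(Y)$ are pairwise distinct; $\Omega_i$, $E_i$ denote regions/edges of color $i$. For $\mu=(p,q,r,s)\in\mathbb{C}^4$, a $\mu$-Markoff map is $\phi:\Omega\to\mathbb{C}$ such that (i) at every vertex with regions $X\in\Omega_1,Y\in\Omega_2,Z\in\Omega_3$, $x^2+y^2+z^2+xyz=px+qy+rz+s$ where $x=\phi(X)$, etc.; (ii) for $e\in E_1$, $e\leftrightarrow(Y,Z;X,X')$: $\phi(X)+\phi(X')=p-\phi(Y)\phi(Z)$; for $e\in E_2$, $e\leftrightarrow(X,Z;Y,Y')$: $\phi(Y)+\phi(Y')=q-\phi(X)\phi(Z)$;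 for $e\in E_3$, $e\leftrightarrow(X,Y;Z,Z')$: $\phi(Z)+\phi(Z')=r-\phi(X)\phi(Y)$. $\Phi_\mu$ is the set of such maps. Fibonacci function: for a directed edge $\vec e$ with underlying edge $e=X_1\cap X_2$, let $\Omega^0(e)=\{X_1,X_2\}$; removing the interior of $e$ leaves two subtrees $\Sigma^+$ (containing the head of $\vec e$) and $\Sigma^-$; $\Omega^\pm(\vec e)$ is the set of regions whose boundary lies in $\Sigma^\pm$, and $\Omega^{0-}(\vec e)=\Omega^0(e)\cup\Omega^-(\vec e)$. For $Z\in\Omega^{0-}(\vec e)$ let $d(Z)$ be the number of edges in a shortest path from the head of $\vec e$ to $Z$. For $Z\in\Omega^-(\vec e)$ there are exactly two regions $X,Y\in\Omega^{0-}(\vec e)$ with $d(X),d(Y)<d(Z)$ meeting $Z$ (and $X,Y,Z$ meet at a vertex). Define $F_{\vec e}=1$ on $\Omega^0(e)$ and recursively $F_{\vec e}(Z)=F_{\vec e}(X)+F_{\vec e}(Y)$ for such $Z$. Define $F_e(X)=F_{\vec e}(X)$ for $X\in\Omega^{0-}(\vec e)$ and $F_e(X)=F_{-\vec e}(X)$ for $X\in\Omega^+(\vec e)$. *)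

(* Defs.v *)
From Stdlib Require Import Reals ZArith ClassicalEpsilon.
From Coquelicot Require Import Coquelicot.

(* Sigma is the (unique up to homeomorphism of the plane) countably   *)
(* infinite trivalent tree properly embedded in the plane; we use the  *)
(* standard model: Sigma is the tree dual to the Farey tessellation.   *)
(* Complementary regions <-> Q u {oo}, encoded as primitive integer    *)
(* vectors (a,b) up to sign, normalized by b > 0 or (a,b) = (1,0).     *)
(* Two regions meet in an edge of Sigma iff |ad - bc| = 1; the edges   *)
(* of Sigma are exactly the (unordered) pairs of such regions, and the *)
(* vertices of Sigma are the triples of pairwise adjacent regions.     *)

Definition is_region (v : Z * Z) : Prop :=
  Z.gcd (fst v) (snd v) = 1%Z /\
  ((0 < snd v)%Z \/ (snd v = 0%Z /\ fst v = 1%Z)).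

Definition region : Type := { v : Z * Z | is_region v }.

Definition rnum (X : region) : Z := fst (proj1_sig X).
Definition rden (X : region) : Z := snd (proj1_sig X).

Definition adj (X Y : region) : Prop :=
  Z.abs (rnum X * rden Y - rden X * rnum Y) = 1%Z.

(* Z meets both X and Y; for adjacent X, Y these are exactly the two   *)
(* regions Z, W containing the two endpoints of the edge X cap Y, i.e. *)
(* e <-> (X, Y; Z, W).                                                 *)
Definition common_nb (X Y Z : region) : Prop := adj X Z /\ adj Y Z.

Definition at_vertex (X Y Z : region) : Prop :=
  adj X Y /\ adj Y Z /\ adj X Z.

Inductive color : Type := c1 | c2 | c3.

(* Cr colors regions, Ce colors edges; the edge X cap Y has color      *)
(* Ce X Y (the constraints below force Ce X Y = Ce Y X).               *)
Definition is_coloring (Cr : region -> color)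
    (Ce : region -> region -> color) : Prop :=
  forall X Y Z W : region,
    adj X Y -> common_nb X Y Z -> common_nb X Y W -> Z <> W ->
    Ce X Y = Cr Z /\ Ce X Y = Cr W /\
    Ce X Y <> Cr X /\ Ce X Y <> Cr Y /\ Cr X <> Cr Y.

Local Open Scope C_scope.

Definition is_markoff_map (Cr : region -> color)
    (Ce : region -> region -> color) (p q r s : C)
    (phi : region -> C) : Prop :=
  (forall X Y Z : region, at_vertex X Y Z ->
     Cr X = c1 -> Cr Y = c2 -> Cr Z = c3 ->
     let x := phi X in let y := phi Y in let z := phi Z in
     x * x + y * y + z * z + x * y * z = p * x + q * y + r * z + s) /\
  (forall Y Z X X' : region, adj Y Z ->
     common_nb Y Z X -> common_nb Y Z X' -> X <> X' ->
     Ce Y Z = c1 -> phi X + phi X' = p - phi Y * phi Z) /\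
  (forall X Z Y Y' : region, adj X Z ->
     common_nb X Z Y -> common_nb X Z Y' -> Y <> Y' ->
     Ce X Z = c2 -> phi Y + phi Y' = q - phi X * phi Z) /\
  (forall X Y Z Z' : region, adj X Y ->
     common_nb X Y Z -> common_nb X Y Z' -> Z <> Z' ->
     Ce X Y = c3 -> phi Z + phi Z' = r - phi X * phi Y).

Local Close Scope C_scope.

(* fib_edge X1 X2 X Y W a b : the edge X cap Y of Sigma, traversed      *)
(* away from e, where W is the region at the endpoint of X cap Y       *)
(* closer to e, F_e(X) = a and F_e(Y) = b.  The region Z at the far    *)
(* endpoint of X cap Y is the new region with d(Z) > d(X), d(Y), and   *)
(* the recursion gives F_e(Z) = F_e(X) + F_e(Y).                       *)
Inductive fib_edge (X1 X2 : region) :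
    region -> region -> region -> nat -> nat -> Prop :=
  | fib_start : forall W, common_nb X1 X2 W ->
      fib_edge X1 X2 X1 X2 W 1 1
  | fib_left : forall X Y W Z a b,
      fib_edge X1 X2 X Y W a b -> common_nb X Y Z -> Z <> W ->
      fib_edge X1 X2 X Z Y a (a + b)
  | fib_right : forall X Y W Z a b,
      fib_edge X1 X2 X Y W a b -> common_nb X Y Z -> Z <> W ->
      fib_edge X1 X2 Y Z X b (a + b).

Definition fib_val (X1 X2 Z : region) (k : nat) : Prop :=
  ((Z = X1 \/ Z = X2) /\ k = 1%nat) \/
  (exists X Y W a b, fib_edge X1 X2 X Y W a b /\
     common_nb X Y Z /\ Z <> W /\ k = (a + b)%nat).

Definition fib (X1 X2 : region) (Z : region) : nat :=
  epsilon (inhabits 0%nat) (fib_val X1 X2 Z).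

(* log^+ |z| = max (log |z|, 0); note ln 0 = 0 in Stdlib, so log^+|0| = 0 *)
Definition logplus (z : C) : R := Rmax (ln (Cmod z)) 0.

(* Main.v *)
Require Import Defs.
From Stdlib Require Import Reals ZArith Lia Psatz ClassicalEpsilon ProofIrrelevance Classical.
From Coquelicot Require Import Coquelicot.

Open Scope Z_scope.

Definition vec (X : region) : Z * Z := proj1_sig X.
Definition det2 (u v : Z * Z) : Z := fst u * snd v - snd u * fst v.
Definition eqv (u v : Z * Z) : Prop := u = v \/ u = (- fst v, - snd v).
Definition fco (e g : Z * Z) (m n : Z) : Z * Z :=
  (m * fst e + n * fst g, m * snd e + n * snd g).

Lemma adj_det X Y : adj X Y <-> Z.abs (det2 (vec X) (vec Y)) = 1.
Proof. reflexivity. Qed.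

Lemma det2_oppl u v : det2 (- fst u, - snd u) v = - det2 u v.
Proof. unfold det2; simpl; ring. Qed.
Lemma det2_oppr u v : det2 u (- fst v, - snd v) = - det2 u v.
Proof. unfold det2; simpl; ring. Qed.

Lemma det_eqv u u' v v' : eqv u u' -> eqv v v' ->
  Z.abs (det2 u v) = Z.abs (det2 u' v').
Proof.
  intros [->| ->] [->| ->]; rewrite ?det2_oppl, ?det2_oppr, ?Z.abs_opp; auto.
Qed.

Lemma eqv_refl u : eqv u u. Proof. left; auto. Qed.
Lemma eqv_sym u v : eqv u v -> eqv v u.
Proof. destruct u, v; unfold eqv; simpl; intros [H|H]; inversion H; subst.
  left; auto. right; f_equal; ring. Qed.
Lemma eqv_trans u v w : eqv u v -> eqv v w -> eqv u w.
Proof. destruct u, v, w; unfold eqv; simpl; intros [H|H] [H'|H'];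
  inversion H; inversion H'; subst; [left|right|right|left]; f_equal; ring. Qed.
Lemma eqv_opp u v : eqv u (- fst v, - snd v) -> eqv u v.
Proof. intro H; eapply eqv_trans; [exact H|]. right; destruct v; simpl; f_equal; ring. Qed.

Lemma adj_of X Y u v : eqv (vec X) u -> eqv (vec Y) v ->
  Z.abs (det2 u v) = 1 -> adj X Y.
Proof. intros H1 H2 H3. apply adj_det. rewrite (det_eqv _ _ _ _ H1 H2). auto. Qed.

Lemma det2_self u : det2 u u = 0.
Proof. unfold det2; ring. Qed.

Lemma neq_of X Y u v : eqv (vec X) u -> eqv (vec Y) v -> det2 u v <> 0 -> X <> Y.
Proof.
  intros H1 H2 H3 ->. apply H3.
  assert (H := det_eqv _ _ _ _ (eqv_sym _ _ H1) (eqv_sym _ _ H2)).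
  rewrite det2_self in H. simpl in H. lia.
Qed.

Lemma adj_sym X Y : adj X Y -> adj Y X.
Proof. unfold adj. intro H. rewrite <- H. rewrite <- Z.abs_opp. f_equal. ring. Qed.

Lemma reg_eq X Y : eqv (vec X) (vec Y) -> X = Y.
Proof.
  destruct X as [[a b] HX], Y as [[c d] HY]; unfold vec, eqv; simpl.
  intros [H|H].
  - inversion H; subst. f_equal. apply proof_irrelevance.
  - exfalso. inversion H; subst. unfold is_region in *; simpl in *. lia.
Qed.

Lemma mkreg a b : Z.gcd a b = 1 -> exists X : region, eqv (vec X) (a, b).
Proof.
  intro H.
  destruct (Z.lt_trichotomy b 0) as [Hb|[Hb|Hb]].
  - assert (Hr : is_region (- a, - b)).
    { split; simpl. rewrite Z.gcd_opp_l, Z.gcd_opp_r; auto. lia. }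
    exists (exist _ _ Hr). right; reflexivity.
  - subst. rewrite Z.gcd_0_r in H.
    assert (Hr : is_region (1, 0)). { split; simpl; auto. }
    exists (exist _ _ Hr). unfold vec, eqv; simpl.
    destruct (Z.abs_spec a) as [[_ Ha]|[_ Ha]]; [left|right]; f_equal; lia.
  - assert (Hr : is_region (a, b)). { split; simpl; auto. }
    exists (exist _ _ Hr). left; reflexivity.
Qed.

Lemma prim a b c d : Z.abs (a * d - b * c) = 1 -> Z.gcd a b = 1.
Proof.
  intro H. apply Z.divide_1_r_nonneg. apply Z.gcd_nonneg.
  assert (Hd : (Z.gcd a b | a * d - b * c)).
  { apply Z.divide_sub_r; apply Z.divide_mul_l;
    [apply Z.gcd_divide_l | apply Z.gcd_divide_r]. }
  destruct (Z.abs_spec (a*d - b*c)) as [[_ E]|[_ E]]; rewrite E in H.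
  - rewrite <- H; auto.
  - replace 1 with (- (a*d-b*c)) by lia. apply Z.divide_opp_r; auto.
Qed.

Lemma prim_v u v : Z.abs (det2 u v) = 1 -> Z.gcd (fst u) (snd u) = 1.
Proof. unfold det2. apply prim. Qed.

Lemma mkreg_v u v : Z.abs (det2 u v) = 1 -> exists X : region, eqv (vec X) u.
Proof. intro H. destruct u as [a b]. apply mkreg. apply (prim_v _ _ H). Qed.

Lemma det_fco e g m n m' n' :
  det2 (fco e g m n) (fco e g m' n') = (m * n' - n * m') * det2 e g.
Proof. unfold det2, fco; simpl; ring. Qed.

Lemma fco_opp e g m n : fco e g (- m) (- n) = (- fst (fco e g m n), - snd (fco e g m n)).
Proof. unfold fco; simpl; f_equal; ring. Qed.

Lemma abs1 x y : Z.abs x = 1 -> Z.abs y = 1 -> Z.abs (x * y) = 1.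
Proof. intros; rewrite Z.abs_mul; lia. Qed.
Close Scope Z_scope. Close Scope R_scope.
Open Scope Z_scope.

Definition RES X1 X2 g a c b d := exists X Y W k l, fib_edge X1 X2 X Y W k l /\
  ((eqv (vec X) (fco (vec X1) g a c) /\ eqv (vec Y) (fco (vec X1) g b d)) \/
   (eqv (vec X) (fco (vec X1) g b d) /\ eqv (vec Y) (fco (vec X1) g a c))) /\
  eqv (vec W) (fco (vec X1) g (a-b) (c-d)).

Lemma RES_sym X1 X2 g a c b d : RES X1 X2 g a c b d -> RES X1 X2 g b d a c.
Proof.
  intros (X & Y & W & k & l & H1 & H2 & H3).
  exists X, Y, W, k, l. split; [auto|split].
  - destruct H2; auto.
  - apply eqv_opp. rewrite <- fco_opp.
    replace (- (b - a)) with (a - b) by ring. replace (- (d - c)) with (c - d) by ring. auto.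
Qed.

Lemma fco10 e g : fco e g 1 0 = e.
Proof. destruct e, g; unfold fco; cbn [fst snd]; f_equal; ring. Qed.
Lemma fco01 e g : fco e g 0 1 = g.
Proof. destruct e, g; unfold fco; cbn [fst snd]; f_equal; ring. Qed.

Lemma RES_base X1 X2 g : eqv (vec X2) g -> Z.abs (det2 (vec X1) g) = 1 ->
  RES X1 X2 g 1 0 0 1.
Proof.
  intros Hg Hd.
  destruct (mkreg_v (fco (vec X1) g 1 (-1)) (fco (vec X1) g 1 0)) as [W HW].
  { rewrite det_fco. apply abs1; auto. }
  exists X1, X2, W, 1%nat, 1%nat. split.
  - constructor. split.
    + apply (adj_of _ _ (fco (vec X1) g 1 0) (fco (vec X1) g 1 (-1))); auto.
      rewrite fco10; apply eqv_refl. rewrite det_fco; apply abs1; auto.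
    + apply (adj_of _ _ (fco (vec X1) g 0 1) (fco (vec X1) g 1 (-1))); auto.
      rewrite fco01; auto. rewrite det_fco; apply abs1; auto.
  - split. left. rewrite fco10, fco01. split; auto. apply eqv_refl.
    auto.
Qed.

Lemma RES_step X1 X2 g a c b d : Z.abs (det2 (vec X1) g) = 1 ->
  Z.abs (a * d - c * b) = 1 -> RES X1 X2 g a c b d -> RES X1 X2 g (a+b) (c+d) b d.
Proof.
  intros Hd Hab (X & Y & W & k & l & H1 & H2 & H3).
  set (F := fco (vec X1) g).
  destruct (mkreg_v (F (a+b) (c+d)) (F b d)) as [Z HZ].
  { unfold F; rewrite det_fco. apply abs1; auto.
    replace ((a + b) * d - (c + d) * b) with (a*d - c*b) by ring; auto. }
  assert (HZW : Z <> W).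
  { apply (neq_of _ _ _ _ HZ H3). unfold F; rewrite det_fco.
    apply Z.neq_mul_0; split; [|lia]. lia. }
  assert (A1 : forall T, eqv (vec T) (F a c) -> adj T Z).
  { intros T HT. apply (adj_of _ _ _ _ HT HZ). unfold F; rewrite det_fco.
    apply abs1; auto. replace (a * (c + d) - c * (a + b)) with (a*d - c*b) by ring; auto. }
  assert (A2 : forall T, eqv (vec T) (F b d) -> adj T Z).
  { intros T HT. apply (adj_of _ _ _ _ HT HZ). unfold F; rewrite det_fco.
    apply abs1; auto. rewrite <- Z.abs_opp.
    replace (- (b * (c + d) - d * (a + b))) with (a*d - c*b) by ring; auto. }
  unfold RES. replace (a + b - b) with a by ring. replace (c + d - d) with c by ring.
  destruct H2 as [[HX HY]|[HX HY]].
  - exists Y, Z, X, l, (k + l)%nat. split.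
    + eapply fib_right; eauto. split; auto.
    + split; auto.
  - exists X, Z, Y, k, (k + l)%nat. split.
    + eapply fib_left; eauto. split; auto.
    + split; auto.
Qed.

Lemma reach X1 X2 g : eqv (vec X2) g -> Z.abs (det2 (vec X1) g) = 1 ->
  forall N a c b d, 0 <= a -> 0 <= b -> 0 <= c -> 0 <= d ->
  Z.abs (a * d - c * b) = 1 -> (Z.to_nat (a + b + c + d) <= N)%nat ->
  RES X1 X2 g a c b d.
Proof.
  intros Hg Hd N. induction N as [|N IH]; intros a c b d Ha Hb Hc Hd' Hdet HN.
  - exfalso. assert (a + b + c + d <= 0) by lia. assert (a = 0) by lia.
    assert (c = 0) by lia. subst. simpl in Hdet. lia.
  - destruct (classic (b <= a /\ d <= c)) as [[H1 H2]|H1].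
    + assert (Hbd : b + d >= 1).
      { destruct (Z.eq_dec b 0) as [->|]; [|lia]. destruct (Z.eq_dec d 0) as [->|]; [|lia].
        lia. }
      replace a with (a - b + b) by ring. replace c with (c - d + d) by ring.
      apply RES_step; auto.
      * replace ((a - b) * d - (c - d) * b) with (a*d - c*b) by ring; auto.
      * apply IH; try lia.
        replace ((a - b) * d - (c - d) * b) with (a*d - c*b) by ring; auto.
    + destruct (classic (a <= b /\ c <= d)) as [[H2 H3]|H2].
      * assert (Hbd : a + c >= 1).
        { destruct (Z.eq_dec a 0) as [->|]; [|lia]. destruct (Z.eq_dec c 0) as [->|]; [|lia].
          lia. }
        apply RES_sym.
        replace b with (b - a + a) by ring. replace d with (d - c + c) by ring.
        apply RES_step; auto.
        -- rewrite <- Z.abs_opp.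
           replace (- ((b - a) * c - (d - c) * a)) with (a*d - c*b) by ring; auto.
        -- apply IH; try lia.
      * destruct (Z_lt_le_dec a b) as [Hab|Hab].
        -- assert (d < c) by lia.
           assert (b * c >= (a + 1) * (d + 1)) by nia.
           assert (a = 0 /\ d = 0 /\ b = 1 /\ c = 1) as (-> & -> & -> & ->) by nia.
           apply RES_sym. apply RES_base; auto.
        -- assert (c < d) by lia. assert (b < a) by lia.
           assert (a * d >= (b + 1) * (c + 1)) by nia.
           assert (b = 0 /\ c = 0 /\ a = 1 /\ d = 1) as (-> & -> & -> & ->) by nia.
           apply RES_base; auto.
Qed.
Close Scope Z_scope. Close Scope R_scope.
Open Scope Z_scope.

Lemma bezout N : forall m n, 1 <= m -> 1 <= n -> Z.gcd m n = 1 ->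
  (Z.to_nat (m + n) <= N)%nat ->
  exists a c b d, 0 <= a /\ 0 <= b /\ 0 <= c /\ 0 <= d /\
    Z.abs (a * d - c * b) = 1 /\ a + b = m /\ c + d = n.
Proof.
  induction N as [|N IH]; intros m n Hm Hn Hg HN; [lia|].
  destruct (Z.lt_trichotomy m n) as [H|[H|H]].
  - assert (Hg' : Z.gcd m (n - m) = 1).
    { rewrite Z.gcd_sub_diag_r. auto. }
    destruct (IH m (n - m) ltac:(lia) ltac:(lia) Hg' ltac:(lia)) as (a & c & b & d & H1 & H2 & H3 & H4 & H5 & H6 & H7).
    exists a, (a + c), b, (b + d). repeat split; try lia.
  - subst. rewrite Z.gcd_diag in Hg.
    exists 1, 0, 0, 1. repeat split; try lia.
  - assert (Hg' : Z.gcd (m - n) n = 1).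
    { rewrite Z.gcd_comm, Z.gcd_sub_diag_r, Z.gcd_comm. auto. }
    destruct (IH (m - n) n ltac:(lia) ltac:(lia) Hg' ltac:(lia)) as (a & c & b & d & H1 & H2 & H3 & H4 & H5 & H6 & H7).
    exists (a + c), c, (b + d), d. repeat split; try lia.
Qed.

Lemma final_case X1 X2 g Z m n : eqv (vec X2) g -> Z.abs (det2 (vec X1) g) = 1 ->
  1 <= m -> 1 <= n -> Z.gcd m n = 1 -> eqv (vec Z) (fco (vec X1) g m n) ->
  exists k, fib_val X1 X2 Z k.
Proof.
  intros Hg Hd Hm Hn Hmn HZ.
  destruct (bezout (Z.to_nat (m + n)) m n) as (a & c & b & d & H1 & H2 & H3 & H4 & H5 & <- & <-);
    auto.
  destruct (reach X1 X2 g Hg Hd (Z.to_nat (a+b+c+d)) a c b d) as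
    (X & Y & W & k & l & E & HXY & HW); auto.
  set (F := fco (vec X1) g) in *.
  assert (A1 : forall T, eqv (vec T) (F a c) -> adj T Z).
  { intros T HT. apply (adj_of _ _ _ _ HT HZ). unfold F; rewrite det_fco.
    apply abs1; auto. replace (a * (c + d) - c * (a + b)) with (a*d - c*b) by ring; auto. }
  assert (A2 : forall T, eqv (vec T) (F b d) -> adj T Z).
  { intros T HT. apply (adj_of _ _ _ _ HT HZ). unfold F; rewrite det_fco.
    apply abs1; auto. rewrite <- Z.abs_opp.
    replace (- (b * (c + d) - d * (a + b))) with (a*d - c*b) by ring; auto. }
  assert (HZW : Z <> W).
  { apply (neq_of _ _ _ _ HZ HW). unfold F; rewrite det_fco.
    apply Z.neq_mul_0; split; [|lia]. lia. }
  exists (k + l)%nat. right. exists X, Y, W, k, l. split; auto. split; [|split; auto].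
  destruct HXY as [[HX HY]|[HX HY]]; split; auto.
Qed.

Lemma gcd_opp2 m n : Z.gcd (- m) (- n) = Z.gcd m n.
Proof. rewrite Z.gcd_opp_l, Z.gcd_opp_r; auto. Qed.
Lemma gcd_oppl m n : Z.gcd (- m) n = Z.gcd m n.
Proof. rewrite Z.gcd_opp_l; auto. Qed.
Lemma gcd_oppr m n : Z.gcd m (- n) = Z.gcd m n.
Proof. rewrite Z.gcd_opp_r; auto. Qed.

Lemma exists_fib X1 X2 : adj X1 X2 -> forall Z, exists k, fib_val X1 X2 Z k.
Proof.
  intros H12 Z. pose proof (proj1 (adj_det X1 X2) H12) as H12'.
  destruct (vec X1) as [e1 e2] eqn:Ee. destruct (vec X2) as [h1 h2] eqn:Eh.
  destruct (vec Z) as [z1 z2] eqn:Ez.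
  assert (Hdet : Z.abs (e1 * h2 - e2 * h1) = 1).
  { unfold det2 in H12'; cbn [fst snd] in H12'. exact H12'. }
  remember (e1 * h2 - e2 * h1) as D eqn:ED.
  assert (HD2 : D * D = 1) by (destruct (Z.abs_spec D) as [[_ ?]|[_ ?]]; nia).
  set (m := D * (z1 * h2 - z2 * h1)). set (n := D * (e1 * z2 - e2 * z1)).
  assert (Ez1 : z1 = m * e1 + n * h1).
  { unfold m, n. transitivity (D * D * z1); [nia|]. rewrite ED. ring. }
  assert (Ez2 : z2 = m * e2 + n * h2).
  { unfold m, n. transitivity (D * D * z2); [nia|]. rewrite ED. ring. }
  assert (Hgz : Z.gcd z1 z2 = 1).
  { pose proof (proj2_sig Z) as [Hg _]. fold (vec Z) in Hg. rewrite Ez in Hg. exact Hg. }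
  assert (He : Z.gcd e1 e2 = 1).
  { pose proof (proj2_sig X1) as [Hg _]. fold (vec X1) in Hg. rewrite Ee in Hg. exact Hg. }
  assert (Hh : Z.gcd h1 h2 = 1).
  { pose proof (proj2_sig X2) as [Hg _]. fold (vec X2) in Hg. rewrite Eh in Hg. exact Hg. }
  clearbody m n.
  destruct (Z.eq_dec n 0) as [Hn0|Hn0].
  - subst n. rewrite Z.mul_0_l, Z.add_0_r in Ez1, Ez2.
    rewrite Ez1, Ez2, Z.gcd_mul_mono_l, He in Hgz.
    exists 1%nat. left. split; auto. left. apply reg_eq. rewrite Ez, Ee, Ez1, Ez2.
    assert (Hm1 : m = 1 \/ m = -1) by lia.
    destruct Hm1 as [->| ->]; [left|right]; cbn [fst snd]; f_equal; ring.
  - destruct (Z.eq_dec m 0) as [Hm0|Hm0].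
    + subst m. rewrite Z.mul_0_l, Z.add_0_l in Ez1, Ez2.
      rewrite Ez1, Ez2, Z.gcd_mul_mono_l, Hh in Hgz.
      exists 1%nat. left. split; auto. right. apply reg_eq. rewrite Ez, Eh, Ez1, Ez2.
      assert (Hm1 : n = 1 \/ n = -1) by lia.
      destruct Hm1 as [->| ->]; [left|right]; cbn [fst snd]; f_equal; ring.
    + assert (Hmn : Z.gcd m n = 1).
      { apply Z.divide_1_r_nonneg; [apply Z.gcd_nonneg|]. rewrite <- Hgz.
        apply Z.gcd_greatest.
        - rewrite Ez1. apply Z.divide_add_r; apply Z.divide_mul_l;
            [apply Z.gcd_divide_l|apply Z.gcd_divide_r].
        - rewrite Ez2. apply Z.divide_add_r; apply Z.divide_mul_l;
            [apply Z.gcd_divide_l|apply Z.gcd_divide_r]. }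
      assert (Hd1 : Z.abs (det2 (vec X1) (h1, h2)) = 1).
      { rewrite Ee; unfold det2; cbn [fst snd]. rewrite <- ED; auto. }
      assert (Hd2 : Z.abs (det2 (vec X1) (- h1, - h2)) = 1).
      { rewrite Ee; unfold det2; cbn [fst snd]. rewrite <- Z.abs_opp.
        replace (- (e1 * - h2 - e2 * - h1)) with D by (rewrite ED; ring). auto. }
      assert (Hg1 : eqv (vec X2) (h1, h2)) by (rewrite Eh; apply eqv_refl).
      assert (Hg2 : eqv (vec X2) (- h1, - h2)) by (rewrite Eh; right; cbn; f_equal; ring).
      destruct (Z_lt_le_dec 0 m) as [Hm|Hm]; destruct (Z_lt_le_dec 0 n) as [Hn|Hn].
      * apply (final_case X1 X2 (h1, h2) Z m n); auto; try lia.
        rewrite Ez, Ee, Ez1, Ez2. left; unfold fco; cbn; auto.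
      * apply (final_case X1 X2 (- h1, - h2) Z m (- n)); auto; try lia.
        rewrite gcd_oppr; auto.
        rewrite Ez, Ee, Ez1, Ez2. left; unfold fco; cbn; f_equal; ring.
      * apply (final_case X1 X2 (- h1, - h2) Z (- m) n); auto; try lia.
        rewrite gcd_oppl; auto.
        rewrite Ez, Ee, Ez1, Ez2. right; unfold fco; cbn; f_equal; ring.
      * apply (final_case X1 X2 (h1, h2) Z (- m) (- n)); auto; try lia.
        rewrite gcd_opp2; auto.
        rewrite Ez, Ee, Ez1, Ez2. right; unfold fco; cbn; f_equal; ring.
Qed.

Lemma classify X Y Z : adj X Y -> common_nb X Y Z ->
  eqv (vec Z) (fst (vec X) + fst (vec Y), snd (vec X) + snd (vec Y)) \/
  eqv (vec Z) (fst (vec X) - fst (vec Y), snd (vec X) - snd (vec Y)).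
Proof.
  intros H1 [H2 H3].
  pose proof (proj1 (adj_det _ _) H1) as A1.
  pose proof (proj1 (adj_det _ _) H2) as A2.
  pose proof (proj1 (adj_det _ _) H3) as A3.
  destruct (vec X) as [x1 x2], (vec Y) as [y1 y2], (vec Z) as [z1 z2].
  unfold det2 in *; cbn [fst snd] in *.
  assert (I1 : (x1*y2 - x2*y1) * z1 = (z1*y2 - z2*y1) * x1 + (x1*z2 - x2*z1) * y1) by ring.
  assert (I2 : (x1*y2 - x2*y1) * z2 = (z1*y2 - z2*y1) * x2 + (x1*z2 - x2*z1) * y2) by ring.
  assert (B1 : z1*y2 - z2*y1 = - (y1*z2 - y2*z1)) by ring.
  rewrite B1 in I1, I2.
  remember (x1*y2 - x2*y1) as d1. remember (y1*z2 - y2*z1) as d2.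
  remember (x1*z2 - x2*z1) as d3.
  assert (S1 : d1 = 1 \/ d1 = -1) by lia.
  assert (S2 : d2 = 1 \/ d2 = -1) by lia.
  assert (S3 : d3 = 1 \/ d3 = -1) by lia.
  unfold eqv; cbn [fst snd].
  destruct S1 as [E1|E1]; destruct S2 as [E2|E2]; destruct S3 as [E3|E3];
    rewrite E1, E2, E3 in *;
    first [ left; left; f_equal; lia | left; right; f_equal; lia
          | right; left; f_equal; lia | right; right; f_equal; lia ].
Qed.
Close Scope Z_scope. Close Scope R_scope.
Open Scope R_scope.

Lemma my_ln_le x y : 0 < x -> x <= y -> ln x <= ln y.
Proof. intros H [H'|<-]; [left; apply ln_increasing; auto | right; auto]. Qed.
Lemma my_exp_le x y : x <= y -> exp x <= exp y.
Proof. intros [H|<-]; [left; apply exp_increasing; auto | right; auto]. Qed.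

Lemma my_ln_0 : ln 0 = 0.
Proof. unfold ln. destruct (Rlt_dec 0 0) as [h|h]; [exfalso; lra|reflexivity]. Qed.

Definition uu (z : C) : R := Rmax 1 (Cmod z).
Definition ll (z : C) : R := ln (uu z).

Lemma uu_ge1 z : 1 <= uu z. Proof. apply Rmax_l. Qed.
Lemma uu_pos z : 0 < uu z. Proof. pose proof (uu_ge1 z); lra. Qed.
Lemma ll_ge0 z : 0 <= ll z.
Proof. unfold ll. rewrite <- ln_1. apply my_ln_le; [lra|apply uu_ge1]. Qed.
Lemma cmod_le_uu z : Cmod z <= uu z. Proof. apply Rmax_r. Qed.

Lemma logplus_le z : logplus z <= ll z.
Proof.
  unfold logplus. apply Rmax_lub; [|apply ll_ge0].
  destruct (Cmod_ge_0 z) as [H|H].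
  - apply my_ln_le; auto. apply cmod_le_uu.
  - rewrite <- H, my_ln_0. apply ll_ge0.
Qed.

Lemma cmod_step (c x y w zz : C) : (zz + w = c - x * y)%C ->
  Cmod zz <= Cmod c + Cmod x * Cmod y + Cmod w.
Proof.
  intro H. replace zz with (c + (- (x * y)) + (- w))%C.
  - eapply Rle_trans; [apply Cmod_triangle|]. rewrite Cmod_opp.
    eapply Rle_trans; [apply Rplus_le_compat_r; apply Cmod_triangle|].
    rewrite Cmod_opp, Cmod_mult. lra.
  - replace (c + - (x * y))%C with (c - x * y)%C by ring. rewrite <- H. ring.
Qed.

Lemma uu_step (c x y w zz : C) K0 : Cmod c <= K0 -> 1 <= K0 ->
  (zz + w = c - x * y)%C ->
  uu zz <= 3 * K0 * Rmax (uu x * uu y) (uu w).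
Proof.
  intros Hc HK H. pose proof (cmod_step _ _ _ _ _ H) as H1.
  set (M := Rmax (uu x * uu y) (uu w)).
  assert (M1 : uu x * uu y <= M) by apply Rmax_l.
  assert (M2 : uu w <= M) by apply Rmax_r.
  assert (Hx := uu_ge1 x). assert (Hy := uu_ge1 y).
  assert (M3 : 1 <= M) by (assert (1 <= uu x * uu y) by nra; lra).
  assert (Cmod x * Cmod y <= uu x * uu y).
  { apply Rmult_le_compat; auto using Cmod_ge_0, cmod_le_uu. }
  assert (Cmod w <= uu w) by apply cmod_le_uu.
  unfold uu at 1. apply Rmax_lub; nra.
Qed.

Lemma ll_step (c x y w zz : C) K0 T : Cmod c <= K0 -> 1 <= K0 ->
  (zz + w = c - x * y)%C -> ll x + ll y <= T -> ll w <= T ->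
  ll zz <= ln (3 * K0) + T.
Proof.
  intros Hc HK H Hxy Hw.
  assert (HM : Rmax (uu x * uu y) (uu w) <= exp T).
  { apply Rmax_lub.
    - rewrite <- (exp_ln (uu x * uu y)).
      + apply my_exp_le. rewrite ln_mult; auto using uu_pos.
      + apply Rmult_lt_0_compat; apply uu_pos.
    - rewrite <- (exp_ln (uu w)); [|apply uu_pos]. apply my_exp_le; auto. }
  unfold ll at 1. rewrite <- (ln_exp T), <- ln_mult; [| lra | apply exp_pos].
  apply my_ln_le; [apply uu_pos|].
  eapply Rle_trans; [eapply uu_step; eauto|].
  apply Rmult_le_compat_l; [lra|auto].
Qed.
Close Scope Z_scope. Close Scope R_scope.
Open Scope R_scope.

Definition Inv (phi : region -> C) (ka E D : R) (X Y W : region) (a b : nat) : Prop :=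
  adj X Y /\ common_nb X Y W /\ (1 <= a)%nat /\ (1 <= b)%nat /\
  ll (phi X) + E <= ka * INR a /\ ll (phi Y) + E <= ka * INR b /\
  ll (phi W) <= ka * (INR a + INR b - 2) + D.

Lemma step_core (phi : region -> C) K0 ka D X Y W Z a b :
  (forall X Y Z W, adj X Y -> common_nb X Y Z -> common_nb X Y W -> Z <> W ->
     exists c, Cmod c <= K0 /\ (phi Z + phi W = c - phi X * phi Y)%C) ->
  1 <= K0 -> 2 * ln (3 * K0) + D <= 2 * ka ->
  Inv phi ka (ln (3 * K0)) D X Y W a b -> common_nb X Y Z -> Z <> W ->
  ll (phi Z) + ln (3 * K0) <= ka * (INR a + INR b).
Proof.
  intros Hrel HK Hk (H1 & H2 & H3 & H4 & H5 & H6 & H7) HZ HZW.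
  destruct (Hrel X Y Z W H1 HZ H2 HZW) as (c & Hc & Heq).
  assert (L := ll_step c (phi X) (phi Y) (phi W) (phi Z) K0
    (ka * (INR a + INR b) - 2 * ln (3 * K0)) Hc HK Heq).
  assert (ll (phi Z) <= ln (3 * K0) + (ka * (INR a + INR b) - 2 * ln (3 * K0))).
  { apply L; nra. }
  lra.
Qed.

Lemma INR_ge1 a : (1 <= a)%nat -> 1 <= INR a.
Proof. intro H. apply le_INR in H. simpl in H. exact H. Qed.

Lemma inv_all (phi : region -> C) K0 ka D X1 X2 :
  (forall X Y Z W, adj X Y -> common_nb X Y Z -> common_nb X Y W -> Z <> W ->
     exists c, Cmod c <= K0 /\ (phi Z + phi W = c - phi X * phi Y)%C) ->
  1 <= K0 -> 2 * ln (3 * K0) + D <= 2 * ka -> 0 <= ln (3 * K0) -> 0 <= D -> 0 <= ka ->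
  adj X1 X2 ->
  ll (phi X1) + ln (3 * K0) <= ka -> ll (phi X2) + ln (3 * K0) <= ka ->
  (forall W, common_nb X1 X2 W -> ll (phi W) <= D) ->
  forall X Y W a b, fib_edge X1 X2 X Y W a b -> Inv phi ka (ln (3 * K0)) D X Y W a b.
Proof.
  intros Hrel HK Hk HE HD Hka H12 HX1 HX2 HW.
  induction 1 as [W HcW | X Y W Z a b He IH HZ HZW | X Y W Z a b He IH HZ HZW].
  - assert (ll (phi W) <= D) by auto. destruct HcW.
    repeat split; auto; simpl; lra.
  - pose proof (step_core phi K0 ka D X Y W Z a b Hrel HK Hk IH HZ HZW) as S.
    destruct IH as (H1 & H2 & H3 & H4 & H5 & H6 & H7).
    destruct HZ as [HXZ HYZ].
    assert (A := INR_ge1 a H3). assert (B := INR_ge1 b H4).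
    repeat split; auto; try lia.
    + apply adj_sym; auto.
    + rewrite plus_INR; auto.
    + rewrite plus_INR. nra.
  - pose proof (step_core phi K0 ka D X Y W Z a b Hrel HK Hk IH HZ HZW) as S.
    destruct IH as (H1 & H2 & H3 & H4 & H5 & H6 & H7).
    destruct HZ as [HXZ HYZ].
    assert (A := INR_ge1 a H3). assert (B := INR_ge1 b H4).
    repeat split; auto; try lia.
    + apply adj_sym; auto.
    + apply adj_sym; auto.
    + rewrite plus_INR; auto.
    + rewrite plus_INR. nra.
Qed.
Close Scope Z_scope. Close Scope R_scope.
Open Scope R_scope.

Lemma edge_rel Cr Ce p q r s phi : is_markoff_map Cr Ce p q r s phi ->
  forall X Y Z W, adj X Y -> common_nb X Y Z -> common_nb X Y W -> Z <> W ->
     exists c, Cmod c <= 1 + Cmod p + Cmod q + Cmod r /\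
       (phi Z + phi W = c - phi X * phi Y)%C.
Proof.
  intros (_ & H1 & H2 & H3) X Y Z W HXY HZ HW HZW.
  pose proof (Cmod_ge_0 p). pose proof (Cmod_ge_0 q). pose proof (Cmod_ge_0 r).
  destruct (Ce X Y) eqn:HC.
  - exists p. split; [lra|]. apply (H1 X Y Z W); auto.
  - exists q. split; [lra|]. apply (H2 X Y Z W); auto.
  - exists r. split; [lra|]. apply (H3 X Y Z W); auto.
Qed.

Lemma bounded_one (f : region -> R) v : exists D, 0 <= D /\
  forall W, eqv (vec W) v -> f W <= D.
Proof.
  destruct (classic (exists W0, eqv (vec W0) v)) as [[W0 H0]|H0].
  - exists (Rmax (f W0) 0). split; [apply Rmax_r|].
    intros W HW. assert (W = W0) as ->.
    { apply reg_eq. eapply eqv_trans; [exact HW|]. apply eqv_sym; auto. }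
    apply Rmax_l.
  - exists 0. split; [lra|]. intros W HW. exfalso; eauto.
Qed.

Theorem lemma4p4 :
  forall (Cr : region -> color) (Ce : region -> region -> color),
    is_coloring Cr Ce ->
  forall (p q r s : C) (phi : region -> C),
    is_markoff_map Cr Ce p q r s phi ->
  forall X1 X2 : region, adj X1 X2 ->
  exists kappa : R, (0 < kappa)%R /\
    forall X : region, (logplus (phi X) <= kappa * INR (fib X1 X2 X))%R.
Proof.
  intros Cr Ce _ p q r s phi Hm X1 X2 H12.
  set (K0 := 1 + Cmod p + Cmod q + Cmod r).
  assert (HK : 1 <= K0).
  { unfold K0. pose proof (Cmod_ge_0 p). pose proof (Cmod_ge_0 q). pose proof (Cmod_ge_0 r). lra. }
  set (E := ln (3 * K0)).
  assert (HE : 0 <= E). { unfold E. rewrite <- ln_1. apply my_ln_le; lra. }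
  destruct (bounded_one (fun W => ll (phi W))
     ((fst (vec X1) + fst (vec X2))%Z, (snd (vec X1) + snd (vec X2))%Z)) as (D1 & HD1 & HB1).
  destruct (bounded_one (fun W => ll (phi W))
     ((fst (vec X1) - fst (vec X2))%Z, (snd (vec X1) - snd (vec X2))%Z)) as (D2 & HD2 & HB2).
  set (D := D1 + D2).
  assert (HD : forall W, common_nb X1 X2 W -> ll (phi W) <= D).
  { intros W HW. unfold D. destruct (classify X1 X2 W H12 HW) as [H|H].
    - pose proof (HB1 W H). lra.
    - pose proof (HB2 W H). lra. }
  pose proof (ll_ge0 (phi X1)). pose proof (ll_ge0 (phi X2)).
  set (ka := ll (phi X1) + ll (phi X2) + 2 * E + D + 1).
  assert (G1 : 2 * ln (3 * K0) + D <= 2 * ka) by (fold E; unfold ka, D; lra).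
  assert (G2 : 0 <= D) by (unfold D; lra).
  assert (G3 : 0 <= ka) by (unfold ka, D; lra).
  assert (G4 : ll (phi X1) + ln (3 * K0) <= ka) by (fold E; unfold ka, D; lra).
  assert (G5 : ll (phi X2) + ln (3 * K0) <= ka) by (fold E; unfold ka, D; lra).
  assert (Hinv := inv_all phi K0 ka D X1 X2 (edge_rel Cr Ce p q r s phi Hm) HK
     G1 HE G2 G3 H12 G4 G5 HD).
  exists ka. split; [unfold ka, D; lra|].
  intros X.
  assert (Hf : fib_val X1 X2 X (fib X1 X2 X)).
  { unfold fib. apply epsilon_spec. apply exists_fib; auto. }
  eapply Rle_trans; [apply logplus_le|].
  destruct Hf as [[[-> | ->] ->] | (Y & Z & W & a & b & He & HZ & HZW & ->)].
  - simpl. unfold ka, D; lra.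
  - simpl. unfold ka, D; lra.
  - pose proof (step_core phi K0 ka D Y Z W X a b (edge_rel Cr Ce p q r s phi Hm) HK
       G1 (Hinv _ _ _ _ _ He) HZ HZW).
    rewrite plus_INR. fold E in H1. lra.
Qed.
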